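(* Let $G$ be a compact abelian group with discrete dual group $\Gamma$ and $N \in \mathbb{N}$. Every $N$-PR set $E \subset \Gamma$ is weak $\varepsilon$-Kronecker for $\varepsilon = |1 - e^{\pi i/N}|$.
   Context: $\mathbb{T}$ is the unit circle and $\mathbb{Z}_N$ is identified with the $N$-th roots of unity in $\mathbb{T}$. A subset $E \subset \Gamma$ is $N$-PR if for every function $\varphi: E \to \mathbb{Z}_N$ there exists $x \in G$ with $\varphi(\gamma) = \gamma(x)$ for all $\gamma \in E$. For $\varepsilon > 0$, $E$ is weak $\varepsilon$-Kronecker if for every function $\varphi: E \to \mathbb{T}$ there exists $x \in G$ with $|\varphi(\gamma) - \gamma(x)| \le \varepsilon$ for all $\gamma \in E$. *)

(* Defs.v *)
From HB Require Import structures.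
From mathcomp Require Import all_boot all_order all_algebra.
From mathcomp Require Import all_classical all_reals all_analysis.
From mathcomp Require Import complex.
Set Implicit Arguments. Unset Strict Implicit. Unset Printing Implicit Defensive.
Import Order.TTheory GRing.Theory Num.Theory.
Import numFieldNormedType.Exports.
Local Open Scope classical_set_scope.
Local Open Scope ring_scope.

(* Continuity into R[i]
   (standard topology = product topology on R x R) is expressed through the
   real and imaginary parts. *)
Definition is_character (R : realType) (G : topologicalZmodType)
    (g : G -> R[i]) : Prop :=
  [/\ forall x y : G, g (x + y) = g x * g y,
      forall x : G, `|g x| = 1,
      continuous (fun x : G => complex.Re (g x)) &
      continuous (fun x : G => complex.Im (g x))].

Definition dual_group (R : realType) (G : topologicalZmodType) : set (G -> R[i]) :=
  [set g | is_character g].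

(* Z_N identified with the N-th roots of unity in T. *)
Definition roots_of_unity (R : realType) (N : nat) : set R[i] :=
  [set z | z ^+ N = 1].

Definition circle (R : realType) : set R[i] := [set z | `|z| = 1].

Definition N_PR (R : realType) (G : topologicalZmodType) (N : nat)
    (E : set (G -> R[i])) : Prop :=
  forall phi : (G -> R[i]) -> R[i],
    (forall g, E g -> @roots_of_unity R N (phi g)) ->
    exists x : G, forall g, E g -> phi g = g x.

Definition weak_Kronecker (R : realType) (G : topologicalZmodType) (eps : R[i])
    (E : set (G -> R[i])) : Prop :=
  forall phi : (G -> R[i]) -> R[i],
    (forall g, E g -> @circle R (phi g)) ->
    exists x : G, forall g, E g -> `|phi g - g x| <= eps.

Definition expi (R : realType) (t : R) : R[i] := Complex (cos t) (sin t).

(* Main.v *)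
Require Import Defs.
From HB Require Import structures.
From mathcomp Require Import all_boot all_order all_algebra.
From mathcomp Require Import all_classical all_reals all_analysis.
From mathcomp Require Import complex.
From mathcomp Require Import ring lra.
Import Order.TTheory GRing.Theory Num.Theory.
Import numFieldNormedType.Exports.
Local Open Scope classical_set_scope.
Local Open Scope ring_scope.

Section S.
Variable R : realType.

Lemma expiD (x y : R) : expi x * expi y = expi (x + y).
Proof.
rewrite /expi cosD sinD; apply/eqP; rewrite eq_complex /=; apply/andP; split; apply/eqP; ring.
Qed.

Lemma expiX (x : R) n : expi x ^+ n = expi (x *+ n).
Proof.
elim: n => [|n IH]; first by rewrite expr0 mulr0n /expi cos0 sin0.
by rewrite exprS IH expiD mulrS.
Qed.

Lemma expi2pin n : expi ((pi : R) *+ 2 *+ n) = 1.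
Proof.
have := periodicn (@cosD2pi R) n 0; have := periodicn (@sinD2pi R) n 0.
rewrite !add0r cos0 sin0 /expi => -> -> //.
Qed.

Lemma cos_abs (x : R) : cos `|x| = cos x.
Proof. by case: (lerP 0 x) => h; [rewrite ger0_norm | rewrite ltr0_norm // cosN]. Qed.

Lemma cos_mono (x p : R) : `|x| <= p -> p <= pi -> cos p <= cos x.
Proof.
move=> hx hp; rewrite -(cos_abs x).
have h0 : 0 <= `|x| by [].
have hin1 : `|x| \in `[0, pi] by rewrite in_itv /= h0 (le_trans hx hp).
have hin2 : p \in `[0, pi] by rewrite in_itv /= hp (le_trans h0 hx).
move: hx; rewrite le_eqVlt => /orP[/eqP -> //| hlt].
by apply: ltW; rewrite ltr_cos.
Qed.

Lemma arg_exists (a b : R) : a ^+ 2 + b ^+ 2 = 1 ->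
  exists t, [/\ 0 <= t <= pi *+ 2, cos t = a & sin t = b].
Proof.
move=> hab.
have ha : -1 <= a <= 1 by apply/andP; split; nra.
have hb2 : Num.sqrt (1 - a ^+ 2) = `|b| by rewrite -sqrtr_sqr; congr Num.sqrt; lra.
have h0 := acos_ge0 ha; have h1 := acos_lepi ha.
have hpi : 0 < pi :> R := pi_gt0 R.
case: (lerP 0 b) => hb.
- exists (acos a); split.
  + apply/andP; split => //; lra.
  + exact: acosK.
  + by rewrite sin_acos // hb2 ger0_norm.
- exists (- acos a + pi *+ 2); split.
  + apply/andP; split; lra.
  + by rewrite cosD2pi cosN acosK.
  + by rewrite sinD2pi sinN sin_acos // hb2 ltr0_norm // opprK.
Qed.

Lemma nearest (N : nat) (hN : (0 < N)%N) (z : R[i]) : `|z| = 1 ->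
  exists w, w ^+ N = 1 /\ `|z - w| <= `|1 - expi (pi / N%:R)|.
Proof.
case: z => a b hz.
have hab : a ^+ 2 + b ^+ 2 = 1.
  move: hz; rewrite normc_def /= => /(congr1 (@complex.Re R)) /= hs.
  by rewrite -[LHS]sqr_sqrtr ?hs ?expr1n // addr_ge0 // sqr_ge0.
have [t [/andP [ht0 ht1] hct hst]] := arg_exists a b hab.
have hpi : 0 < pi :> R := pi_gt0 R.
have hNr : 0 < N%:R :> R by rewrite ltr0n.
set c : R := pi *+ 2 / N%:R.
have hc : 0 < c by rewrite /c divr_gt0 // mulrn_wgt0.
set u := t / c.
have hu : 0 <= u + 2^-1 by rewrite /u addr_ge0 // divr_ge0 // ltW.
have /andP [hn1 hn2] := truncn_itv hu.
set n := Num.truncn (u + 2^-1) in hn1 hn2.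
set s := n%:R * c.
exists (expi s); split.
  rewrite expiX -(expi2pin n); congr expi.
  rewrite /s /c -mulr_natr -[RHS]mulr_natr; field; by rewrite gt_eqF.
have hts : `|t - s| <= pi / N%:R.
  have -> : t - s = (u - n%:R) * c by rewrite /u /s mulrBl divfK // gt_eqF.
  rewrite normrM (gtr0_norm hc).
  have -> : pi / N%:R = 2^-1 * c by rewrite /c -mulr_natl; field; rewrite gt_eqF.
  apply: ler_pM => //; first exact: ltW.
  have hn3 : u + 2^-1 < n%:R + 1 by rewrite natr1.
  rewrite ler_norml.
  move: (n%:R : R) hn1 hn3 => m; clear hu hn2; clearbody n; clearbody u; move: u => x h1 h2.
  apply/andP; split; lra.
have hp : pi / N%:R <= pi :> R.
  have hN1 : 1 <= N%:R :> R by rewrite ler1n.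
  have hq : pi / N%:R * N%:R = pi :> R by rewrite divfK // gt_eqF.
  move: (pi / N%:R) hq => q hq; nra.
have hcos := cos_mono _ _ hts hp.
rewrite cosB hct hst in hcos.
rewrite !normc_def /= lecR ler_sqrt; last by rewrite addr_ge0 // sqr_ge0.
have h1 := cos2Dsin2 s; have h2 := cos2Dsin2 (pi / N%:R : R).
move: hcos h1 h2; move: (cos s) (sin s) (cos (pi / N%:R : R)) (sin (pi / N%:R : R)) => x y p q hcos h1 h2.
have -> : (a - x) ^+ 2 + (b - y) ^+ 2 = (a ^+ 2 + b ^+ 2) + (x ^+ 2 + y ^+ 2) - 2 * (a * x + b * y) by ring.
have -> : (1 - p) ^+ 2 + (0 - q) ^+ 2 = 1 + (p ^+ 2 + q ^+ 2) - 2 * p by ring.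
rewrite hab h1 h2; lra.
Qed.
End S.

Theorem proposition2p7 (R : realType) (G : topologicalZmodType)
    (hG : hausdorff_space G) (cG : compact [set: G])
    (N : nat) (hN : (0 < N)%N) (E : set (G -> R[i]))
    (hE : E `<=` @dual_group R G) :
  N_PR N E -> weak_Kronecker `|1 - expi (pi / N%:R)| E.
Proof.
move=> hPR phi hphi.
have hch : forall z : R[i], exists w : R[i],
    `|z| = 1 -> w ^+ N = 1 /\ `|z - w| <= `|1 - expi (pi / N%:R)|.
  move=> z; have [hz|hz] := boolp.pselect (`|z| = 1).
    by have [w hw] := @nearest R N hN z hz; exists w.
  by exists 1.
have [f hf] := boolp.choice hch.
have [x hx] := hPR (fun g => f (phi g)) (fun g Eg => (hf _ (hphi g Eg)).1).
exists x => g Eg; rewrite -hx //; exact: (hf _ (hphi g Eg)).2.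
Qed.
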